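(* For every integer $r\ge1$, writing $\zeta_r(0|z)=\zeta(0,\ldots,0|z)$ ($r$ zeros), \[ \zeta_r(0|1)=\frac{(-1)^r}{r+1}\qquad\text{and}\qquad\zeta_r(0|0)=\frac{(-1)^{r+1}}{r(r+1)}. \]
   Context: Normalized multiple Bernoulli polynomials: for integers $k\ge0$, $\zeta(-k|z)=-\frac{B_{k+1}(z)}{k+1}$ ($B_n(z)$ the Bernoulli polynomials, $B_n=B_n(0)$), and for $r\ge2$, $k_j\ge0$, $\zeta(-k_1,\ldots,-k_r|z)=-\frac{1}{k_r+1}\zeta(-k_1,\ldots,-k_{r-2},-k_{r-1}-k_r-1|z)-\frac12\zeta(-k_1,\ldots,-k_{r-2},-k_{r-1}-k_r|z)+\sum_{q=1}^{k_r}(-k_r)_q\frac{B_{q+1}}{(q+1)!}\zeta(-k_1,\ldots,-k_{r-2},-k_{r-1}-k_r+q|z)$, with $(a)_q=a(a+1)\cdots(a+q-1)$ (for $r=2$ the prefix is empty). *)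

(* Defs.v *)
(* all values are rationals (the polynomials have rational
   coefficients and are evaluated at rational points). *)
From mathcomp Require Import all_boot all_order all_algebra.
Set Implicit Arguments. Unset Strict Implicit. Unset Printing Implicit Defensive.
Import Order.TTheory GRing.Theory Num.Theory.
Local Open Scope ring_scope.

(* Bernoulli numbers B_0, ..., B_n with B_0 = 1 and, for n >= 1,
   sum_{k=0}^{n} C(n+1,k) B_k = 0  (so B_1 = -1/2). *)
Fixpoint bern_list (n : nat) : seq rat :=
  match n with
  | 0 => [:: 1]
  | n'.+1 =>
      let s := bern_list n' in
      rcons s (- (\sum_(k < n'.+1) ('C(n'.+2, k))%:R * nth 0 s k) / (n'.+2)%:R)
  end.

Definition bernoulli (n : nat) : rat := nth 0 (bern_list n) n.

Definition bernpoly (n : nat) (z : rat) : rat :=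
  \sum_(k < n.+1) ('C(n, k))%:R * bernoulli k * z ^+ (n - k).

Definition pochhammer (a : rat) (q : nat) : rat := \prod_(i < q) (a + i%:R).

(* zeta_fuel n ks z : the normalized multiple Bernoulli polynomial
   zeta(-k_1,...,-k_r | z) for ks = [:: k_1; ...; k_r], with fuel n >= r. *)
Fixpoint zeta_fuel (n : nat) (ks : seq nat) (z : rat) : rat :=
  match n with
  | 0 => 0
  | n'.+1 =>
    match ks with
    | [::] => 0
    | [:: k] => - bernpoly k.+1 z / (k.+1)%:R
    | _ =>
      let r := size ks in
      let pre := take (r - 2) ks in
      let a := nth 0%N ks (r - 2) in
      let b := nth 0%N ks (r - 1) in
      - (b.+1)%:R^-1 * zeta_fuel n' (rcons pre (a + b).+1%N) z
      - 2%:R^-1 * zeta_fuel n' (rcons pre (a + b)%N) z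
      + \sum_(1 <= q < b.+1)
          pochhammer (- b%:R) q * bernoulli q.+1 / ((q.+1)`!)%:R
          * zeta_fuel n' (rcons pre (a + b - q)%N) z
    end
  end.

Definition mzeta (ks : seq nat) (z : rat) : rat := zeta_fuel (size ks) ks z.

(* Main.v *)
Require Import Defs.
From mathcomp Require Import all_boot all_order all_algebra ring.
Import Order.TTheory GRing.Theory Num.Theory.
Local Open Scope ring_scope.


Lemma size_bern_list n : size (bern_list n) = n.+1.
Proof. by elim: n => [|n IH] //=; rewrite size_rcons IH. Qed.

Lemma nth_bern_list n k : (k <= n)%N -> nth 0 (bern_list n) k = bernoulli k.
Proof.
elim: n k => [|n IH] k hk.
  by move: hk; rewrite leqn0 => /eqP ->.
rewrite leq_eqVlt in hk; case/orP: hk => [/eqP -> //|hk].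
rewrite /= nth_rcons size_bern_list hk; exact: IH.
Qed.

Lemma bern_rec n : (2 <= n)%N -> \sum_(k < n) ('C(n, k))%:R * bernoulli k = 0.
Proof.
case: n => [//|[//|n]] _.
rewrite big_ord_recr /=.
have -> : bernoulli n.+1 = - (\sum_(k < n.+1) ('C(n.+2, k))%:R * bernoulli k) / (n.+2)%:R.
  rewrite /bernoulli /= nth_rcons size_bern_list ltnn eqxx.
  congr (- _ / _); apply: eq_bigr => i _; rewrite nth_bern_list //.
  by rewrite -ltnS.
have h : (n.+2)%:R != 0 :> rat by rewrite pnatr_eq0.
by rewrite binSn mulrCA mulfV // mulr1 subrr.
Qed.


Definition bpoly (n : nat) : {poly rat} :=
  \sum_(k < n.+1) (('C(n, k))%:R * bernoulli k) *: 'X^(n - k).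

Lemma horner_bpoly n z : (bpoly n).[z] = bernpoly n z.
Proof.
rewrite /bpoly horner_sum /bernpoly; apply: eq_bigr => i _.
by rewrite hornerZ hornerXn.
all: done. Qed.

Lemma deriv_bpoly n : (bpoly n.+1)^`() = (n.+1)%:R *: bpoly n.
Proof.
rewrite /bpoly raddf_sum big_ord_recr /= subnn derivZ derivXn /= mulr0n scaler0 addr0.
rewrite scaler_sumr; apply: eq_bigr => i _.
rewrite derivZ derivXn -scaler_nat !scalerA.
have hi : (i <= n)%N by rewrite -ltnS.
rewrite subSn // /=; congr (_ *: _).
rewrite mulrAC -natrM mulnC -subSn // -mul_bin_down /= natrM -mulrA mulrCA.
all: done. Qed.


Lemma deriv0_const (p : {poly rat}) : p^`() = 0 -> p = (p.[0])%:P.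
Proof.
move=> h; apply/polyP => i; rewrite coefC horner_coef0.
case: i => [//|i] /=.
have := congr1 (fun q : {poly rat} => q`_i) h; rewrite coef_deriv coef0 => /eqP.
by rewrite mulrn_eq0 /= => /eqP.
Qed.

Lemma bpoly0 n : (bpoly n).[0] = bernoulli n.
Proof.
rewrite horner_bpoly /bernpoly big_ord_recr /= subnn expr0 mulr1 binn mul1r.
rewrite big1 ?add0r // => i _; rewrite expr0n subn_eq0 leqNgt ltn_ord /= mulr0 //.
Qed.

Lemma bpoly1 n : (bpoly n).[1] = \sum_(k < n.+1) ('C(n, k))%:R * bernoulli k.
Proof.
rewrite horner_bpoly /bernpoly; apply: eq_bigr => i _; by rewrite expr1n mulr1.
Qed.

Lemma bpoly_shift n : bpoly n \Po ('X + 1) - bpoly n = n%:R *: 'X^(n.-1).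
Proof.
elim: n => [|n IH].
  by rewrite /bpoly big_ord1 subnn expr0 comp_polyZ -polyC1 comp_polyC subrr scale0r.
apply/eqP; rewrite -subr_eq0; apply/eqP.
set E := _ - _.
have hE : E^`() = 0.
  rewrite /E !derivB deriv_comp deriv_bpoly derivD derivX derivC addr0 mulr1.
  rewrite derivZ derivXn /= comp_polyZ -scaler_nat -!scalerBr IH subrr scaler0 //.
rewrite (deriv0_const _ hE) /E !hornerE horner_comp !hornerE bpoly0 bpoly1.
rewrite big_ord_recr /= binn mul1r addrK.
case: n {IH E hE} => [|n].
  by rewrite big_ord1 bin0 mul1r /bernoulli /= subrr.
by rewrite (@bern_rec n.+2) // expr0n /= mulr0 subrr.
Qed.


Definition lin (f : nat -> rat) (p : {poly rat}) : rat :=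
  \sum_(i < size p) p`_i * f i.

Lemma linE N f (p : {poly rat}) : (size p <= N)%N -> lin f p = \sum_(i < N) p`_i * f i.
Proof.
move=> hN; rewrite /lin (big_ord_widen N (fun i => p`_i * f i) hN) big_mkcond /=.
apply: eq_bigr => i _; case: ifP => // /negbT; rewrite -leqNgt => h.
by rewrite nth_default // mul0r.
Qed.

Lemma linD f p q : lin f (p + q) = lin f p + lin f q.
Proof.
set N := maxn (size p) (size q).
rewrite (@linE N _ _) ?(leq_trans (size_polyD _ _)) //.
rewrite (@linE N _ _ (leq_maxl _ _)) (@linE N _ _ (leq_maxr _ _)) -big_split /=.
by apply: eq_bigr => i _; rewrite coefD mulrDl.
Qed.

Lemma linZ f c p : lin f (c *: p) = c * lin f p.
Proof.
rewrite (@linE (size p) _ _) ?size_scale_leq // /lin mulr_sumr.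
by apply: eq_bigr => i _; rewrite coefZ mulrA.
Qed.

Lemma lin0 f : lin f 0 = 0.
Proof. by rewrite /lin size_poly0 big_ord0. Qed.

Lemma linN f p : lin f (- p) = - lin f p.
Proof. by rewrite -scaleN1r linZ mulN1r. Qed.

Lemma linB f p q : lin f (p - q) = lin f p - lin f q.
Proof. by rewrite linD linN. Qed.

Lemma lin_sum f (I : Type) (r : seq I) (P : pred I) (F : I -> {poly rat}) :
  lin f (\sum_(i <- r | P i) F i) = \sum_(i <- r | P i) lin f (F i).
Proof.
elim: r => [|a r IH]; first by rewrite !big_nil lin0.
by rewrite !big_cons; case: (P a); rewrite ?linD IH.
Qed.

Lemma linXn f n : lin f 'X^n = f n.
Proof.
rewrite (@linE n.+1 _ _) ?size_polyXn // big_ord_recr /= big1 ?add0r.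
  by rewrite coefXn eqxx mul1r.
by move=> i _; rewrite coefXn (ltn_eqF (ltn_ord i)) mul0r.
Qed.

Lemma linC f c : lin f c%:P = c * f 0%N.
Proof. by rewrite -alg_polyC -(expr0 'X) linZ linXn. Qed.

Lemma horner_lin p x : p.[x] = lin (fun i => x ^+ i) p.
Proof. by rewrite horner_coef. Qed.

Definition linP (f : nat -> {poly rat}) (p : {poly rat}) : {poly rat} :=
  \sum_(i < size p) p`_i *: f i.

Definition A (q : {poly rat}) : {poly rat} :=
  linP (fun k => ((k.+1)%:R)^-1 *: bpoly k.+1) q.

Definition J : {poly rat} -> rat := lin (fun i => ((i.+1)%:R)^-1).

Lemma A_shift q x : (A q).[x + 1] - (A q).[x] = q.[x].
Proof.
rewrite /A /linP !horner_sum -sumrB horner_coef; apply: eq_bigr => i _.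
rewrite !hornerZ -mulrBr; congr (_ * _).
rewrite -mulrBr.
have := congr1 (fun P => P.[x]) (bpoly_shift i.+1).
rewrite hornerD hornerN horner_comp !hornerE /= => ->.
by rewrite mulrA mulVf ?mul1r // pnatr_eq0.
Qed.

Lemma J_bpoly n : (1 <= n)%N -> J (bpoly n) = 0.
Proof.
move=> hn; rewrite /J /bpoly lin_sum.
rewrite (eq_bigr (fun k : 'I_n.+1 => ((n.+1)%:R)^-1 * (('C(n.+1, k))%:R * bernoulli k))).
  by rewrite -mulr_sumr bern_rec ?mulr0.
move=> i _; rewrite linZ linXn.
have hi : (i <= n)%N by rewrite -ltnS.
have h := mul_bin_down n.+1 i; rewrite /= subSn // in h.
have h1 : ((n - i).+1%:R : rat) != 0 by rewrite pnatr_eq0.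
have h2 : ((n.+1)%:R : rat) != 0 by rewrite pnatr_eq0.
have hC : ('C(n.+1, i))%:R = (n.+1)%:R * ('C(n, i))%:R / ((n - i).+1)%:R :> rat.
  by rewrite -natrM h natrM mulrC mulrA mulVf ?mul1r.
rewrite hC; field; by move: h1 h2; rewrite -!natr1 !(addrC _ 1) => -> ->.
Qed.


Lemma J_A q : J (A q) = 0.
Proof.
rewrite /J /A /linP lin_sum big1 // => i _.
by rewrite !linZ -/J (@J_bpoly i.+1) // !mulr0.
Qed.

Lemma J_deriv p : J p^`() = p.[1] - p.[0].
Proof.
rewrite /J (@linE (size p)); last by have [->|/lt_size_deriv/ltnW //] := eqVneq p 0; rewrite deriv0 size_poly0.
rewrite horner_lin (@linE (size p).+1) // big_ord_recl /= horner_coef0 expr0 mulr1 addrC addKr.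
apply: eq_bigr => i _; rewrite coef_deriv expr1n mulr1 -[p`_i.+1 *+ _]mulr_natr mulfK //.
by rewrite pnatr_eq0.
Qed.

Lemma periodic_const (D : {poly rat}) : (forall x, D.[x + 1] = D.[x]) -> D = (D.[0])%:P.
Proof.
move=> hD; apply/eqP; rewrite -subr_eq0; apply/negPn/negP => hE.
set E := D - _ in hE.
have hr : forall n : nat, root E n%:R.
  move=> n; rewrite /root /E !hornerE; elim: n => [|n IH]; first by rewrite subrr.
  by rewrite -natr1 hD.
have h1 : all (root E) [seq i%:R | i <- iota 0 (size E)].
  by apply/allP => x /mapP [i _ ->].
have h2 : uniq [seq (i%:R : rat) | i <- iota 0 (size E)].
  by rewrite map_inj_uniq ?iota_uniq // => a b /eqP; rewrite eqr_nat => /eqP.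
by have := max_poly_roots hE h1 h2; rewrite size_map size_iota ltnn.
Qed.

Lemma uniq_A (Q q : {poly rat}) :
  (forall x, Q.[x + 1] - Q.[x] = q.[x]) -> J Q = 0 -> Q = A q.
Proof.
move=> hs hJ; apply/eqP; rewrite -subr_eq0; apply/eqP.
have hp : forall x, (Q - A q).[x + 1] = (Q - A q).[x].
  move=> x; apply/eqP; rewrite -subr_eq0 !hornerE.
  have h1 := hs x; have h2 := A_shift q x.
  apply/eqP; have -> : Q.[x + 1] - (A q).[x + 1] - (Q.[x] - (A q).[x]) =
    (Q.[x+1] - Q.[x]) - ((A q).[x+1] - (A q).[x]) by ring.
  by rewrite h1 h2 subrr.
have : J (Q - A q) = 0 by rewrite /J linB -/J hJ J_A subrr.
rewrite (periodic_const _ hp) /J linC => h.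
have h' : (Q - A q).[0] = 0 by move: h; rewrite mulr1n invr1 mulr1.
by rewrite h' polyC0.
Qed.


Fixpoint Pb (n : nat) : {poly rat} :=
  match n with
  | 0 => 1
  | n'.+1 => ((n'.+1)%:R)^-1 *: (Pb n' * ('X - (n'%:R)%:P))
  end.

Definition g (n : nat) : {poly rat} := (Pb n)^`().

Lemma hornerPbS n x : (Pb n.+1).[x] = (Pb n).[x] * (x - n%:R) / (n.+1)%:R.
Proof. by rewrite /= hornerZ hornerM !hornerE mulrC mulrA. Qed.

Lemma poly_eval_eq (p q : {poly rat}) : (forall x, p.[x] = q.[x]) -> p = q.
Proof.
move=> h; apply/eqP; rewrite -subr_eq0; apply/eqP.
have hp : forall x, (p - q).[x + 1] = (p - q).[x] by move=> x; rewrite !hornerE !h !subrr.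
by rewrite (periodic_const _ hp) !hornerE h subrr.
Qed.

Lemma Pb_shift_eval n x : (Pb n.+1).[x + 1] - (Pb n.+1).[x] = (Pb n).[x].
Proof.
elim: n x => [|n IH] x.
  by rewrite !hornerPbS /= !hornerE; field.
have h := IH x.
rewrite hornerPbS [(Pb n.+2).[x]]hornerPbS.
have -> : (Pb n.+1).[x + 1] = (Pb n.+1).[x] + (Pb n).[x] by rewrite -h; ring.
rewrite [(Pb n.+1).[x]]hornerPbS.
have h1 : (n.+1%:R : rat) != 0 by rewrite pnatr_eq0.
have h2 : (n.+2%:R : rat) != 0 by rewrite pnatr_eq0.
rewrite -!natr1 in h1 h2 *; field; by rewrite h1 h2.
Qed.

Lemma Pb_shift n : Pb n.+1 \Po ('X + 1) - Pb n.+1 = Pb n.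
Proof.
apply: poly_eval_eq => x.
by rewrite hornerD hornerN horner_comp hornerD hornerX hornerC Pb_shift_eval.
Qed.

Lemma g_shift n x : (g n.+1).[x + 1] - (g n.+1).[x] = (g n).[x].
Proof.
have := congr1 deriv (Pb_shift n).
rewrite derivB deriv_comp derivD derivX derivC addr0 mulr1 /g => <-.
by rewrite hornerD hornerN horner_comp !hornerE.
Qed.

Lemma Pb_root n j : (j < n)%N -> (Pb n).[j%:R] = 0.
Proof.
elim: n => [//|n IH] hj.
rewrite hornerPbS; move: hj; rewrite ltnS leq_eqVlt => /orP [/eqP ->|hj].
  by rewrite subrr mulr0 mul0r.
by rewrite IH // !mul0r.
Qed.

Lemma J_g n : J (g n.+2) = 0.
Proof.
rewrite /g J_deriv -[1]/(1%:R) -[0]/(0%:R) !Pb_root // subrr //.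
Qed.

Lemma A_g n : A (g n.+1) = g n.+2.
Proof. by symmetry; apply: uniq_A; [exact: g_shift | exact: J_g]. Qed.

Lemma g1 : g 1 = 1.
Proof.
rewrite /g /= invr1 scale1r mul1r derivB derivX derivC subr0 //.
Qed.

Lemma Pb_coef0 n : (Pb n.+1)`_0 = 0.
Proof. by rewrite -horner_coef0 -[0]/(0%:R) Pb_root. Qed.

Lemma Pb_coef1S n : (Pb n.+1)`_1 = ((Pb n)`_0 - (Pb n)`_1 * n%:R) / (n.+1)%:R.
Proof.
by rewrite [Pb n.+1]/= coefZ mulrBr coefB coefMX coefMC /= mulrC.
Qed.

Lemma g_at0 n : (g n.+1).[0] = (-1) ^+ n / (n.+1)%:R.
Proof.
rewrite /g horner_coef0 coef_deriv mulr1n.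
elim: n => [|n IH].
  by rewrite Pb_coef1S /= coefC /= mulr0 subr0 expr0.
rewrite (Pb_coef1S n.+1) Pb_coef0 IH exprS.
have h1 : (n.+1%:R : rat) != 0 by rewrite pnatr_eq0.
have h2 : (n.+2%:R : rat) != 0 by rewrite pnatr_eq0.
rewrite -!natr1 in h1 h2 *; field; by rewrite h1 h2.
Qed.


Lemma zf_step n ks z : (2 <= size ks)%N ->
  zeta_fuel n.+1 ks z =
      let r := size ks in
      let pre := take (r - 2) ks in
      let a := nth 0%N ks (r - 2) in
      let b := nth 0%N ks (r - 1) in
      - (b.+1)%:R^-1 * zeta_fuel n (rcons pre (a + b).+1%N) z
      - 2%:R^-1 * zeta_fuel n (rcons pre (a + b)%N) z
      + \sum_(1 <= q < b.+1)
          pochhammer (- b%:R) q * bernoulli q.+1 / ((q.+1)`!)%:R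
          * zeta_fuel n (rcons pre (a + b - q)%N) z.
Proof. by case: ks => [|a [|b t]]. Qed.

Lemma rcons_nseq2 m i : rcons (nseq m.+1 0%N) i = nseq m 0%N ++ [:: 0%N; i].
Proof. by elim: m => [|m IH] //; rewrite -[nseq m.+2 0%N]/(0%N :: nseq m.+1 0%N) rcons_cons IH. Qed.

Definition Z (z : rat) m j := mzeta (rcons (nseq m 0%N) j) z.

Lemma mzeta_step m i z : mzeta (rcons (nseq m.+1 0%N) i) z =
  - ((i.+1)%:R)^-1 * Z z m i.+1 - 2%:R^-1 * Z z m i
  + \sum_(1 <= q < i.+1) pochhammer (- i%:R) q * bernoulli q.+1 / ((q.+1)`!)%:R * Z z m (i - q).
Proof.
rewrite /mzeta size_rcons size_nseq zf_step; last by rewrite size_rcons size_nseq.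
cbv zeta.
rewrite rcons_nseq2 size_cat size_nseq.
have e1 : (m + size [:: 0%N; i] - 2 = m)%N by rewrite /= addn2 subn2.
have e2 : (m + size [:: 0%N; i] - 1 = m.+1)%N by rewrite /= addn2 subn1.
rewrite e1 e2.
have ht : take m (nseq m 0%N ++ [:: 0%N; i]) = nseq m 0%N.
  by rewrite take_size_cat ?size_nseq.
have ha : nth 0%N (nseq m 0%N ++ [:: 0%N; i]) m = 0%N.
  by rewrite nth_cat size_nseq ltnn subnn.
have hb : nth 0%N (nseq m 0%N ++ [:: 0%N; i]) m.+1 = i.
  by rewrite nth_cat size_nseq ltnNge leqnSn subSnn.
rewrite ht ha hb add0n /Z.
have hs : forall j, size (rcons (nseq m 0%N) j) = m.+1 by move=> j; rewrite size_rcons size_nseq.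
rewrite /mzeta !hs; congr (_ + _); apply: eq_bigr => q _; by rewrite hs.
Qed.


Definition W z m := lin (fun k => (-1)^+k * Z z m k).

Lemma bern0 : bernoulli 0 = 1.
Proof. by []. Qed.

Lemma bern1 : bernoulli 1 = - 2%:R^-1.
Proof.
have := @bern_rec 2 isT; rewrite !big_ord_recr big_ord0 /= add0r bern0 bin0 mul1r.
move=> h; have h2 : (2%:R : rat) != 0 by rewrite pnatr_eq0.
apply: (mulfI h2); rewrite mulrN mulfV //; apply/eqP; rewrite -addr_eq0 addrC.
by apply/eqP; rewrite -h.
Qed.

Lemma poch_val i q : (q <= i)%N -> pochhammer (- i%:R) q = (-1)^+q * (i ^_ q)%:R.
Proof.
elim: q => [|q IH] h; first by rewrite /pochhammer big_ord0 expr0 ffactn0 mul1r.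
rewrite /pochhammer big_ord_recr /= -/(pochhammer _ _) IH ?(ltnW h) //.
rewrite ffactnSr natrM natrB ?(ltnW h) // exprS; ring.
Qed.

Lemma sign_sub i q : (q <= i)%N -> (-1)^+(i - q) = (-1)^+i * (-1)^+q :> rat.
Proof.
by move=> h; rewrite -{2}(subnK h) exprD -mulrA -expr2 sqrr_sign mulr1.
Qed.

Lemma W_bpoly m i z : W z m (((i.+1)%:R)^-1 *: bpoly i.+1) =
  (-1)^+i * mzeta (rcons (nseq m.+1 0%N) i) z.
Proof.
rewrite /W linZ /bpoly lin_sum.
under eq_bigr do rewrite linZ linXn.
rewrite mzeta_step big_ord_recl big_ord_recl /=.
rewrite big_add1 big_mkord /=.
have hsum : \sum_(k < i) 'C(i.+1, k.+2)%:R * bernoulli k.+2 *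
       ((-1) ^+ (i.+1 - k.+2) * Z z m (i.+1 - k.+2)) =
    ((i.+1)%:R * (-1)^+i) * \sum_(k < i)
      pochhammer (- i%:R) k.+1 * bernoulli k.+2 / (k.+2)`!%:R * Z z m (i - k.+1).
  rewrite mulr_sumr; apply: eq_bigr => k _.
  have hk : (k.+1 <= i)%N by [].
  rewrite subSS poch_val // sign_sub //.
  have hC : ('C(i.+1, k.+2))%:R = (i.+1)%:R * (i ^_ k.+1)%:R / ((k.+2)`!)%:R :> rat.
    have hf : ((k.+2)`!%:R : rat) != 0 by rewrite pnatr_eq0 -lt0n fact_gt0.
    by rewrite -natrM -ffactSS -bin_ffact natrM mulfK.
  rewrite hC.
  have hf : ((k.+2)`!%:R : rat) != 0 by rewrite pnatr_eq0 -lt0n fact_gt0.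
  field; exact: hf.
rewrite /bump /= !add1n subn0 subSS subn0 hsum bern0 bern1 bin0 bin1.
have h1 : ((i.+1)%:R : rat) != 0 by rewrite pnatr_eq0.
rewrite exprS.
move: h1; rewrite -natr1 => h1.
field; exact: h1.
Qed.


Lemma W_A z m q : W z m.+1 q = W z m (A q).
Proof.
rewrite [in RHS]/W /A /linP lin_sum /W {1}/lin; apply: eq_bigr => i _.
rewrite linZ; congr (_ * _).
by have := W_bpoly m i z; rewrite /W => ->.
Qed.

Lemma W_g z m n : W z m (g n.+1) = W z 0 (g (n.+1 + m)).
Proof.
elim: m n => [|m IH] n; first by rewrite addn0.
by rewrite W_A A_g IH addnS.
Qed.

Definition pn (p : {poly rat}) : {poly rat} := \poly_(i < size p) ((-1)^+i * p`_i).

Lemma lin_pn f p : lin f (pn p) = lin (fun k => (-1)^+k * f k) p.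
Proof.
rewrite (@linE (size p)) ?size_poly // /lin; apply: eq_bigr => i _.
by rewrite coef_poly ltn_ord mulrA [_ * (-1)^+i]mulrC.
Qed.

Lemma horner_pn p x : (pn p).[x] = p.[- x].
Proof.
rewrite !horner_lin lin_pn /lin; apply: eq_bigr => i _.
by rewrite [(- x)^+ _]exprNn.
Qed.

Lemma horner_A p x : (A p).[x] = lin (fun k => (((k.+1)%:R)^-1 *: bpoly k.+1).[x]) p.
Proof. by rewrite /A /linP horner_sum; apply: eq_bigr => i _; rewrite hornerZ. Qed.

Lemma linN_f f p : lin (fun k => - f k) p = - lin f p.
Proof. by rewrite /lin -sumrN; apply: eq_bigr => i _; rewrite mulrN. Qed.

Lemma W0 z p : W z 0 p = - (A (pn p)).[z].
Proof.
rewrite horner_A lin_pn -linN_f /W /lin; apply: eq_bigr => i _.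
congr (_ * _); rewrite -mulrN; congr (_ * _).
by rewrite /Z /mzeta /= hornerZ horner_bpoly mulrC mulrN.
Qed.

Lemma A_pn_g n : A (pn (g n.+1)) = - ((g n.+2) \Po (1 - 'X)).
Proof.
symmetry; apply: uniq_A.
  move=> x; rewrite horner_pn !hornerN !horner_comp !hornerE.
  rewrite -(g_shift n.+1 (- x)).
  have -> : 1 - (x + 1) = - x by ring.
  have -> : 1 - x = - x + 1 by ring.
  ring.
have -> : - (g n.+2 \Po (1 - 'X)) = (Pb n.+2 \Po (1 - 'X))^`().
  by rewrite deriv_comp derivB derivX -polyC1 derivC sub0r mulrN1.
rewrite J_deriv !horner_comp !hornerD !hornerN !hornerX !hornerC subrr subr0.
by rewrite -[0]/(0%:R) -[1]/(1%:R) !(@Pb_root n.+2) // subrr.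
Qed.

Lemma main_eval m z : mzeta (nseq m.+1 0%N) z = (g m.+2).[1 - z].
Proof.
have e : nseq m.+1 0%N = rcons (nseq m 0%N) 0%N.
  by rewrite -cats1 -[[:: 0%N]]/(nseq 1 0%N) -nseqD addn1.
have -> : mzeta (nseq m.+1 0%N) z = W z m 1.
  by rewrite /W -polyC1 linC mul1r expr0 mul1r /Z e.
rewrite -g1 W_g W0 add1n A_pn_g hornerN opprK horner_comp !hornerE.
by [].
Qed.


Theorem proposition3p6 (r : nat) (hr : (1 <= r)%N) :
  mzeta (nseq r 0%N) 1 = (-1) ^+ r / (r.+1)%:R /\
  mzeta (nseq r 0%N) 0 = (-1) ^+ r.+1 / (r * r.+1)%:R.
Proof.
case: r hr => [//|m] _.
rewrite !main_eval subrr subr0; split; first exact: g_at0.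
have h := g_shift m.+1 0; rewrite add0r in h.
have -> : (g m.+2).[1] = (g m.+2).[0] + (g m.+1).[0] by rewrite -h; ring.
rewrite !g_at0.
have h1 : ((m.+1)%:R : rat) != 0 by rewrite pnatr_eq0.
have h2 : ((m.+2)%:R : rat) != 0 by rewrite pnatr_eq0.
rewrite natrM !exprS.
move: h1 h2; rewrite -!natr1 => h1 h2.
field; by rewrite h1 h2.
Qed.
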